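(* Let $(n,s,L)$ be a tree with $n\notin L$, and let $\{k_1<k_2<\dots<k_m\}=s^{-1}(n)$; put $k_0=0$. Then $k_m=n-1$. Moreover, putting $n_i=k_i-k_{i-1}$ for $i=1,\dots,m$, the triples $(n_i,s_i,L_i)$ are trees, where $s_i(j)=s(j+k_{i-1})-k_{i-1}$ for $j\in\{1,\dots,n_i-1\}$ and $L_i=\{x-k_{i-1}\mid x\in L\}\cap\{1,\dots,n_i\}$.
   Context: For $n\ge1$ write $\underline n=\{1,\dots,n\}$. A tree $(n,s,L)$ consists of a subset $L\subseteq\underline n$ (the leaves) and a map $s:\underline{n-1}\to\underline n\setminus L$ such that (1) $s(x)>x$ for all $x$, and (2) $x\le y<s(x)$ implies $s(y)\le s(x)$. *)

(* Defs.v *)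
From mathcomp Require Import all_boot.
Set Implicit Arguments. Unset Strict Implicit. Unset Printing Implicit Defensive.

(* A tree (n, s, L): n >= 1, L a subset of {1..n} (given as a predicate on nat),
   s : {1..n-1} -> {1..n} \ L, represented by a total function nat -> nat of which
   only the values on {1..n-1} matter. *)
Definition is_tree (n : nat) (s : nat -> nat) (L : pred nat) : Prop :=
  [/\ 1 <= n,
      (forall x, L x -> 1 <= x <= n),
      (forall x, 1 <= x <= n.-1 -> (1 <= s x <= n) && ~~ L (s x)),
      (forall x, 1 <= x <= n.-1 -> x < s x)
    & (forall x y, 1 <= x <= n.-1 -> 1 <= y <= n.-1 -> x <= y < s x -> s y <= s x)].

Definition preim_n (n : nat) (s : nat -> nat) : seq nat :=
  [seq k <- iota 1 n.-1 | s k == n].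

Definition sub_s (s : nat -> nat) (k : nat) : nat -> nat := fun j => s (j + k) - k.
Definition sub_L (L : pred nat) (k ni : nat) : pred nat :=
  fun y => [&& 1 <= y, y <= ni & L (y + k)].

(* Main.v *)
Require Import Defs.
From mathcomp Require Import all_boot.
From mathcomp Require Import zify.

Lemma between_notin (ks : seq nat) (i x : nat) : sorted ltn ks -> i < size ks ->
  nth 0 (0::ks) i < x < nth 0 ks i -> x \notin ks.
Proof.
move=> so Hi /andP[H1 H2]; apply/negP => xin.
have jx := nth_index 0 xin; have js := index_mem x ks.
rewrite xin in js.
have sl : sorted leq ks by apply: sub_sorted so => a b /ltnW.
case: (ltnP (index x ks) i) => hj.
- case: i Hi H1 H2 hj => [//|i'] Hi H1 H2 hj /=.
  rewrite /= in H1.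
  have := sorted_leq_nth leq_trans leqnn 0 sl.
  move=> /(_ (index x ks) i' js) h; have := h (ltac:(rewrite inE; lia)) (ltac:(lia)); rewrite jx; lia.
- have := sorted_leq_nth leq_trans leqnn 0 sl.
  move=> /(_ i (index x ks) Hi js hj); rewrite jx; lia.
Qed.

Theorem lemma3 (n : nat) (s : nat -> nat) (L : pred nat) :
  is_tree n s L -> ~~ L n ->
  let ks := preim_n n s in
  last 0 ks = n.-1 /\
  (forall i, i < size ks ->
     let kprev := nth 0 (0 :: ks) i in
     let ni := nth 0 ks i - kprev in
     is_tree ni (sub_s s kprev) (sub_L L kprev ni)).
Proof.
case=> n1 HL Hs Hlt Hmon HnL ks.
have sn1 : 1 < n -> s n.-1 = n.
  move=> n2; have := Hs n.-1; have := Hlt n.-1.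
  have r : 1 <= n.-1 <= n.-1 by lia.
  move=> /(_ r) h1 /(_ r) /andP[/andP[_ h2] _]; lia.
have so : sorted ltn ks by apply: sorted_filter; [exact: ltn_trans| exact: iota_ltn_sorted].
have memk : forall k, k \in ks = [&& 1 <= k, k <= n.-1 & s k == n].
  move=> k; rewrite /ks /preim_n mem_filter mem_iota.
  case: (s k == n); rewrite ?andbF ?andbT //; apply/idP/idP; lia.
split.
  rewrite /ks /preim_n; case: (ltnP 1 n) => hn; last first.
    by have -> : n = 1 by lia.
  have [m Em] : exists m, n = m.+2 by exists (n - 2); lia.
  have sm := sn1 hn; rewrite Em /= in sm; rewrite Em.
  rewrite [_.-1]/= -[m.+1]addn1 iotaD filter_cat last_cat /=.
  by rewrite add1n addn1 sm eqxx.
move=> i Hi kprev ni.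
have kpk : kprev < nth 0 ks i.
  rewrite /kprev {kprev ni}; case: i Hi => [|i'] Hi /=.
    by have := mem_nth 0 Hi; rewrite memk => /and3P[].
  apply: (sorted_ltn_nth ltn_trans 0 so); rewrite ?inE //; lia.
set k := nth 0 ks i.
have kin : k \in ks by apply: mem_nth.
have kprop := kin; rewrite memk in kprop; move/and3P: kprop => [k1 kn /eqP sk].
have key : forall x, kprev < x < k -> s x <= k.
  move=> x hx; have xr : 1 <= x <= n.-1 by lia.
  rewrite leqNgt; apply/negP => hsx.
  have := Hmon x k xr (ltac:(lia)) (ltac:(lia)); rewrite sk => h.
  have /andP[/andP[_ h2] _] := Hs x xr.
  have : x \in ks by rewrite memk; apply/and3P; split; try lia; apply/eqP; lia.
  by rewrite (negbTE (@between_notin ks i x so Hi hx)).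
have kpn : k <= n.-1 by [].
split.
- rewrite /ni; lia.
- by move=> y /and3P[a b _]; apply/andP.
- move=> j hj; rewrite /sub_s /sub_L.
  have xr : 1 <= j + kprev <= n.-1 by rewrite /ni in hj; lia.
  have hk := key (j + kprev) (ltac:(rewrite /ni in hj; lia)).
  have hl := Hlt _ xr.
  have /andP[_ nl] := Hs _ xr.
  rewrite subnK; last lia.
  rewrite (negbTE nl) !andbF andbT; rewrite /ni; lia.
- move=> j hj; rewrite /sub_s.
  have xr : 1 <= j + kprev <= n.-1 by rewrite /ni in hj; lia.
  have := Hlt _ xr; lia.
- move=> x y hx hy; rewrite /sub_s => hxy.
  have xr : 1 <= x + kprev <= n.-1 by rewrite /ni in hx; lia.
  have yr : 1 <= y + kprev <= n.-1 by rewrite /ni in hy; lia.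
  have := Hlt _ xr => lx.
  have := Hmon _ _ xr yr (ltac:(lia)); lia.
Qed.
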